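(* If $X$ is an (infinite) $T_1$-space, then $\psi(X)\le nu(X)\cdot 2^{s(X)}$.
   Context: A non-empty subset $A$ of a space $X$ is called finitely non-Urysohn if for every non-empty finite subset $F\subseteq A$ and every family $\{U_x:x\in F\}$ where each $U_x$ is an open neighborhood of $x$, we have $\bigcap_{x\in F}\overline{U_x}\neq\emptyset$. The non-Urysohn number is $nu(X):=1+\sup\{|A|:A\subseteq X$ finitely non-Urysohn$\}$. $s(X)$ denotes the spread of $X$ (supremum of cardinalities of discrete subspaces, plus $\omega$) and $\psi(X)$ the pseudocharacter. Throughout, ''space'' means infinite topological space. *)

(* Defs.v *)
From HB Require Import structures.
From mathcomp Require Import all_boot all_order.
From mathcomp Require Import all_classical all_reals all_analysis.
Set Implicit Arguments. Unset Strict Implicit. Unset Printing Implicit Defensive.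
Local Open Scope classical_set_scope.
Local Open Scope card_scope.

Section defs.
Variable X : topologicalType.

Definition finitely_non_urysohn (A : set X) : Prop :=
  A !=set0 /\
  forall F : set X, finite_set F -> F !=set0 -> F `<=` A ->
    forall U : X -> set X, (forall x, F x -> open (U x) /\ U x x) ->
      (\bigcap_(x in F) closure (U x)) !=set0.

(* nu_le N  <->  nu(X) = 1 + sup{|A| : A fin. non-Urysohn} <= |N|.
   (1 + |A| is the cardinality of A plus one new point, realized in option X.) *)
Definition nu_le (N : Type) : Prop :=
  forall A : set X, finitely_non_urysohn A ->
    ((Some @` A) `|` [set None]) #<= [set: N].

Definition discrete_subspace (D : set X) : Prop :=
  forall d, D d -> exists U : set X, open U /\ U `&` D = [set d].

(* s_le S  <->  s(X) = omega + sup{|D| : D discrete} <= |S| *)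
Definition s_le (S : Type) : Prop :=
  infinite_set [set: S] /\
  forall D : set X, discrete_subspace D -> D #<= [set: S].

(* psi_le K  <->  psi(X) = omega + sup_x psi(x,X) <= |K|, where psi(x,X) is the
   least cardinality of a family of open sets whose intersection is {x}. *)
Definition psi_le (K : Type) : Prop :=
  infinite_set [set: K] /\
  forall x : X, exists F : set (set X),
    F #<= [set: K] /\ (forall U, F U -> open U /\ U x) /\
    \bigcap_(U in F) U = [set x].

End defs.

(* Main.v *)
Require Import Defs.
From HB Require Import structures.
From mathcomp Require Import all_boot all_order.
From mathcomp Require Import all_classical all_reals all_analysis.
Set Implicit Arguments. Unset Strict Implicit. Unset Printing Implicit Defensive.
Local Open Scope classical_set_scope.
Local Open Scope card_scope.

Section H.
Context {X : topologicalType}.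

Lemma closure_openP (A : set X) p :
  closure A p <-> forall U, open U -> U p -> A `&` U !=set0.
Proof.
split.
- move=> cl U oU Up; apply: cl; apply: open_nbhs_nbhs; split => //.
- move=> H B; rewrite nbhsE => -[B' [oB' B'p] sB].
  have [z [Az Bz]] := H _ oB' B'p; exists z; split => //; exact: sB.
Qed.

Lemma shapirovskii (Y : set X) (W : X -> set X) :
  (forall y, Y y -> open (W y) /\ W y y) ->
  exists D, D `<=` Y /\ discrete_subspace D /\
    forall y, Y y -> closure D y \/ exists2 d, D d & W d y.
Proof.
move=> HW.
pose adm (D : set X) := D `<=` Y /\ forall d, D d -> exists Op, open Op /\ Op d /\
   forall z, D z -> Op z -> W d z -> z = d.
pose T := {D : set X | adm D}.
pose R (s t : T) := `[< sval s `<=` sval t /\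
   forall y, sval t y -> ~ sval s y -> forall d, sval s d -> ~ W d y >].
have [[D [DY Dadm]] Dmax] : exists t, forall s, R t s -> s = t.
  apply: (@Zorn T R).
  - by move=> t; apply/asboolP; split => // y ? ?.
  - move=> r s t /asboolP [rs rs'] /asboolP [st st']; apply/asboolP; split.
      by move=> z /rs /st.
    move=> y ty nry d rd Wdy.
    have [sy|nsy] := pselect (sval s y).
      exact: (rs' y sy nry d rd).
    exact: (st' y ty nsy d (rs _ rd)).
  - move=> [s hs] [t ht] /asboolP [st _] /asboolP [ts _] /=.
    apply: eq_exist; apply/seteqP; split => //.
  - move=> A Atot.
    pose U := \bigcup_(s in A) sval s.
    have admU : adm U.
      split.
        by move=> z [s _ sz]; case: (svalP s) => + _; apply.
      move=> d [s hAs sd]; case: (svalP s) => _ /(_ d sd) [Op [oOp [Opd HO]]].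
      exists Op; split => //; split => // z [t At tz] Opz Wdz.
      have [|] := Atot s t hAs At => /asboolP [Hs Hs'].
        have [sz|nsz] := pselect (sval s z); first exact: HO.
        by case: (Hs' z tz nsz d sd).
      exact: HO (Hs _ tz) Opz Wdz.
    exists (exist _ U admU) => s hAs; apply/asboolP; split => /=.
      by move=> z sz; exists s.
    move=> y [t At ty] nsy d sd Wdy.
    have [|] := Atot s t hAs At => /asboolP [Hs Hs'].
      exact: (Hs' y ty nsy d sd).
    exact: nsy (Hs _ ty).
exists D; split => //; split.
  move=> d Dd; have [Op [oOp [Opd HO]]] := Dadm d Dd.
  have [oW Wd] := HW d (DY d Dd).
  exists (Op `&` W d); split; first exact: openI.
  apply/seteqP; split.
    by move=> z [[Opz Wz] Dz]; apply: HO.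
  by move=> z ->; split.
move=> y Yy; have [|ncl] := pselect (closure D y); first by left.
have [|nW] := pselect (exists2 d, D d & W d y); first by right.
exfalso.
have [B oB [By BD]] : exists2 B, open B & B y /\ D `&` B = set0.
  move/closure_openP: ncl => /existsNP [B /not_implyP [oB /not_implyP [By /set0P/negP]]].
  by rewrite negbK => /eqP BD; exists B.
pose D' := D `|` [set y].
have admD' : adm D'.
  split; first by move=> z [/DY //| -> ].
  move=> d [Dd|->].
    have [Op [oOp [Opd HO]]] := Dadm d Dd.
    exists Op; split => //; split => // z [Dz|->] Opz Wdz; first exact: HO.
    by exfalso; apply: nW; exists d.
  exists B; split => //; split => // z [Dz|->] // Bz _.
  by have : (D `&` B) z by []; rewrite BD.
have := Dmax (exist _ D' admD'); rewrite /R /= => /(_ _) H.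
have : exist _ D' admD' = exist _ D (conj DY Dadm).
  apply: H; apply/asboolP; split => /=; first by move=> z; left.
  move=> z [Dz|->] // _ d Dd Wdy; apply: nW; exists d => //.
move=> /(congr1 sval) /= eD.
apply: ncl; apply: subset_closure; rewrite -eD; by right.
Qed.

End H.

Lemma card_le_inj T U (A : set T) (u0 : U) :
  A #<= [set: U] -> exists f : T -> U, {in A &, injective f}.
Proof.
elim/Ppointed: U u0 => U u0.
  by case: (no u0).
by move/pcard_injP.
Qed.

Lemma inj_card_leT T U (A : set T) (f : T -> U) :
  {in A &, injective f} -> A #<= [set: U].
Proof.
move=> fi; apply: (@card_le_trans _ _ _ (f @` A)).
  by have /card_eqPle[] := inj_card_eq fi.
exact: card_leT.
Qed.

Lemma card_le_inj0 T U (A : set T) :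
  A !=set0 -> A #<= [set: U] -> exists f : T -> U, {in A &, injective f}.
Proof.
move=> [a Aa]; elim/Ppointed: U => U; last by move/pcard_injP.
rewrite (_ : [set: U] = set0); last by apply: empty_eq0.
by move/card_le0P => A0; move: Aa; rewrite A0.
Qed.

Theorem corollary3p10 (X : topologicalType) :
  @accessible_space X -> infinite_set [set: X] ->
  forall (N S : Type), nu_le X N -> s_le X S -> psi_le X (N * (S -> bool)).
Proof.
move=> T1 Xinf N S nuN [Sinf sS].
have [s0 _] := infinite_setN0 Sinf.
pose K (x : X) := [set y | forall U, open U -> U x -> closure U y].
have Kfnu : forall x, finitely_non_urysohn (K x).
  move=> x; split.
    by exists x => U _ Ux; apply: subset_closure.
  move=> F _ _ FK U HU; exists x => z Fz.
  have [oU Uz] := HU z Fz.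
  apply/closure_openP => V oV Vx.
  have /closure_openP := FK z Fz V oV Vx.
  move=> /(_ _ oU Uz) [w [Vw Uw]]; by exists w.
have iota : forall x, exists f : option X -> N,
    {in (Some @` K x) `|` [set None] &, injective f}.
  move=> x; apply: card_le_inj0; last exact: nuN.
  by exists None; right.
have [x0 _] := infinite_setN0 Xinf.
have [n0 _] : exists n : N, True by have [f _] := iota x0; exists (f None).
split.
  apply/infiniteP; apply: (@card_le_trans _ _ _ [set: S]); first exact/infiniteP.
  apply: (@inj_card_leT _ _ _ (fun s => (n0, fun t => `[< t = s >]))).
  move=> s t _ _ [] /(congr1 (fun f => f s)).
  by move=> /= e; apply/asboolP; rewrite -e; apply/asboolP.
move=> x.
have [io ioinj] := iota x.
have : forall y, exists U : set X, ~ K x y -> open U /\ U x /\ ~ closure U y.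
  move=> y; have [Ky|nKy] := pselect (K x y); first by exists setT.
  move/existsNP: nKy => [U /not_implyP [oU /not_implyP [Ux ncl]]].
  by exists U.
move=> /choice [Uf HUf].
pose W y := ~` closure (Uf y).
have HW : forall y, (~` K x) y -> open (W y) /\ W y y.
  move=> y nKy; have [oU [Ux ncl]] := HUf y nKy; split => //.
  by rewrite /W openC; apply: closed_closure.
have L : forall y, ~ K x y -> forall B, B `<=` W y -> ~ closure B x.
  move=> y nKy B BW /closure_openP.
  have [oU [Ux _]] := HUf y nKy.
  move=> /(_ _ oU Ux) [z [Bz Uz]].
  by apply: (BW z Bz); apply: subset_closure.
have [D [DY [Ddisc Dcov]]] := shapirovskii HW.
have [iD iDinj] := card_le_inj s0 (sS D Ddisc).
pose Bf (f : S -> bool) := [set d | D d /\ f (iD d)].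
pose Cf (f : S -> bool) := \bigcup_(d in Bf f) W d.
pose guard (A : set X) := if pselect (closure A x) then setT else ~` closure A.
pose E (n : N) := [set y | y <> x /\ K x y /\ io (Some y) = n].
pose g (p : N * (S -> bool)) := ~` E p.1 `&` guard (Bf p.2) `&` guard (Cf p.2).
have guardP : forall A, open (guard A) /\ guard A x.
  move=> A; rewrite /guard; case: pselect => /= ncl; first by split => //; exact: openT.
  by split => //; rewrite openC; apply: closed_closure.
have gP : forall p, open (g p) /\ g p x.
  move=> [n f]; rewrite /g /=.
  have [oG1 G1x] := guardP (Bf f); have [oG2 G2x] := guardP (Cf f).
  split; last by split => //; split => // -[].
  apply: openI => //; apply: openI => //.
  rewrite openC.
  have [[y Ey]|nE] := pselect (exists y, E n y).
    rewrite (_ : E n = [set y]); first exact: accessible_closed_set1.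
    apply/seteqP; split => [z Ez|z ->//].
    have [_ [Kz ez]] := Ez; have [_ [Ky ey]] := Ey.
    have : Some z = Some y.
      apply: ioinj; rewrite ?inE; [by left; exists z|by left; exists y|].
      by rewrite ez ey.
    by case.
  rewrite (_ : E n = set0); first exact: closed0.
  by apply/seteqP; split => // z Ez; apply: nE; exists z.
exists (g @` setT); split; first exact: card_image_le.
split; first by move=> U [p _ <-]; apply: gP.
apply/seteqP; split; last by move=> y -> U [p _ <-]; case: (gP p).
move=> y Hy; have [//|yx] := pselect (y = x); exfalso.
have [Ky|nKy] := pselect (K x y).
  have := Hy (g (io (Some y), fun _ => false)) (ex_intro2 _ _ _ I erefl).
  by move=> [[+ _] _]; apply.
have [clD|[d Dd Wdy]] := Dcov y nKy.
  pose f := fun s => `[< exists2 d, (D `&` W y) d & iD d = s >].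
  have := Hy (g (io None, f)) (ex_intro2 _ _ _ I erefl).
  move=> [[_]]; rewrite /guard /=.
  case: pselect => /= [cl|_ ncl _].
    move=> _ _; refine (L y nKy (Bf f) _ cl).
    move=> d [Dd /asboolP [d' [Dd' Wd'] ed]].
    have -> : d = d' by apply: iDinj; rewrite ?inE.
    exact: Wd'.
  apply: ncl; apply/closure_openP => V oV Vy.
  have [oW Wy] := HW y nKy.
  have /closure_openP := clD.
  move=> /(_ (V `&` W y) (openI oV oW) (conj Vy Wy)) [z [Dz [Vz Wz]]].
  exists z; split => //; split => //; apply/asboolP; by exists z.
pose f := fun s => `[< s = iD d >].
have := Hy (g (io None, f)) (ex_intro2 _ _ _ I erefl).
move=> [_]; rewrite /guard /=.
have inC : Cf f y by exists d => //; split => //; apply/asboolP.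
case: pselect => /= [cl|ncl]; last by apply; apply: subset_closure.
move=> _; refine (L d (fun Kd => DY d Dd Kd) (Cf f) _ cl).
move=> z [d' [Dd' /asboolP ed] Wz].
have -> : d = d' by apply: iDinj; rewrite ?inE.
exact: Wz.
Qed.
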